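(* Let $x$ be a half-integer square point with support graph $G_x$, let $H$ be a Hamiltonian cycle of $G_x$ containing all 1-edges of $x$ and two opposite half-edges from each half-square, and let $G=(V,E)$ be the 4-regular graph obtained from $G_x$ by replacing each path of 1-edges by a single 1-edge and contracting each half-square into a vertex. Let $\alpha>0$. If $P(G,\alpha)$ holds, then the vector $r^{\alpha,x}$ can be written as a convex combination of 2-edge-connected multigraphs of $G_x$.
   Context: $\mathrm{LP}(G)$ is the set of $x\in\mathbb{R}^E$ with $0\le x\le2$ and $x(\delta(S))\ge2$ for all $\emptyset\subsetneq S\subsetneq V$. The support graph $G_x$ has edge set $\{e:x_e>0\}$; 1-edges have $x_e=1$, half-edges $x_e=\frac12$. A half-integer Boyd-Carr point is a point $x\in\mathrm{LP}(G)$ with entries in $\{0,\frac12,1\}$ such that $G_x$ is cubic and 3-edge-connected, exactly one 1-edge is incident to each vertex, and the half-edges form vertex-disjoint 4-cycles (half-squares); a half-integer square point is obtained from such a point by replacing each 1-edge by a path of 1-edges of arbitrary length. Let $A$ be the set of 1-edges of $G_x$, $B$ the half-edges in $H$, and $C$ the half-edges not in $H$. For $\alpha>0$, $r^{\alpha,x}\in\mathbb{R}^{E(G_x)}$ has $r^{\alpha,x}_e=1+\alpha$ for $e\in A$, $r^{\alpha,x}_e=\frac12$ for $e\in B$, and $r^{\alpha,x}_e=1-\alpha$ for $e\in C$. $P(G,\alpha)$ holds if the everywhere $\alpha$ vector for $G$ (all entries $\alpha$) can be written as $\sum_{i=1}^k\lambda_i\chi^{M_i}$ with $\lambda_i\ge0$,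 $\sum_i\lambda_i=1$, where each $M_i$ is a matching of $G$ such that $(V,E\setminus M_i)$ is 2-vertex-connected. A 2-edge-connected multigraph of $G_x$ is a multiset of edges of $G_x$ forming a spanning 2-edge-connected multigraph; its incidence vector counts copies of each edge, and ''written as a convex combination'' means equal to a convex combination of such incidence vectors. *)

(* Defs.v *)
From HB Require Import structures.
From mathcomp Require Import all_boot all_order all_algebra.
From mathcomp Require Import reals.

Set Implicit Arguments.
Unset Strict Implicit.
Unset Printing Implicit Defensive.

Import Order.TTheory GRing.Theory Num.Theory.
Local Open Scope ring_scope.

(* Finite multigraphs: a vertex type V, an edge type E and an endpoint  *)
(* map [ends : E -> V * V] (parallel edges allowed; a loop e has        *)
(* (ends e).1 = (ends e).2).                                            *)
Section Multigraph.
Variables (V E : finType) (ends : E -> V * V).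

Definition incident (e : E) (v : V) : bool :=
  ((ends e).1 == v) || ((ends e).2 == v).

Definition delta (S : {set V}) : {set E} :=
  [set e | ((ends e).1 \in S) != ((ends e).2 \in S)].

Definition edge_connected (k : nat) : Prop :=
  forall S : {set V}, S != set0 -> S != setT -> (k <= #|delta S|)%N.

Definition inLP {R : realType} (x : E -> R) : Prop :=
  (forall e, 0 <= x e <= 2) /\
  (forall S : {set V}, S != set0 -> S != setT -> 2 <= \sum_(e in delta S) x e).

Definition adj_in (Es : {set E}) (W : {set V}) : rel V :=
  fun u v => [&& u \in W, v \in W &
    [exists e in Es, (((ends e).1 == u) && ((ends e).2 == v))
                  || (((ends e).1 == v) && ((ends e).2 == u))]].

Definition connected_in (Es : {set E}) (W : {set V}) : Prop :=
  forall u v, u \in W -> v \in W -> connect (adj_in Es W) u v.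

(* (V, Es) is 2-vertex-connected (Diestel): more than 2 vertices, and
   (V, Es) - X is connected for every vertex set X with |X| < 2. *)
Definition two_vertex_connected (Es : {set E}) : Prop :=
  (2 < #|V|)%N /\ connected_in Es setT /\
  (forall v : V, connected_in Es (setT :\ v)).

Definition matching (M : {set E}) : Prop :=
  (forall e, e \in M -> (ends e).1 != (ends e).2) /\
  (forall e f v, e \in M -> f \in M -> e != f -> incident e v -> ~~ incident f v).

Definition deg_in (Es : {set E}) (v : V) : nat := #|[set e in Es | incident e v]|.

Definition hamiltonian_cycle (Hc : {set E}) : Prop :=
  (forall v, deg_in Hc v = 2%N) /\ connected_in Hc setT.

(* a multiset y of edges (y e = number of copies of e) forms a spanning
   2-edge-connected multigraph: every cut contains at least two copies *)
Definition two_ecm (y : E -> nat) : Prop :=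
  forall S : {set V}, S != set0 -> S != setT -> (2 <= \sum_(e in delta S) y e)%N.

(* P(G, alpha): the everywhere-alpha vector is a convex combination of
   incidence vectors of matchings M_i with (V, E \ M_i) 2-vertex-connected *)
Definition P_prop {R : realType} (alpha : R) : Prop :=
  exists (k : nat) (lam : 'I_k -> R) (M : 'I_k -> {set E}),
    (forall i, 0 <= lam i) /\ \sum_(i < k) lam i = 1 /\
    (forall i, matching (M i) /\ two_vertex_connected (~: M i)) /\
    (forall e, alpha = \sum_(i < k) lam i * (e \in M i)%:R).

Definition convex_comb_2ecm {R : realType} (r : E -> R) : Prop :=
  exists (k : nat) (lam : 'I_k -> R) (y : 'I_k -> E -> nat),
    (forall i, 0 <= lam i) /\ \sum_(i < k) lam i = 1 /\
    (forall i, two_ecm (y i)) /\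
    (forall e, r e = \sum_(i < k) lam i * (y i e)%:R).

End Multigraph.

(* Half-integer square points (up to isomorphism).                      *)
(* Q : the half-squares; half-square q has the four vertices (q,i),     *)
(*     i : 'I_4, in cyclic order, with half-edges (q,i)--(q,i+1).       *)
(* F : the 1-edges of the underlying Boyd-Carr point; 1-edge f joins    *)
(*     the square vertices e1 f and e2 f.                               *)
(* In the half-integer square point, 1-edge f is replaced by a path of  *)
(* (lenm1 f).+1 1-edges, with lenm1 f new internal vertices.            *)
Section SquarePoint.
Variables (Q F : finType) (e1 e2 : F -> Q * 'I_4) (lenm1 : F -> nat).

Definition bc_vert := (Q * 'I_4)%type.
Definition bc_edge := ((Q * 'I_4) + F)%type.

Definition bc_ends (e : bc_edge) : bc_vert * bc_vert :=
  match e with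
  | inl (q, i) => ((q, i), (q, ordS i))
  | inr f => (e1 f, e2 f)
  end.

Definition bc_x {R : realType} (e : bc_edge) : R :=
  match e with inl _ => 1 / 2 | inr _ => 1 end.

(* exactly one 1-edge at each vertex: (f,side) |-> endpoint is a bijection *)
Definition one_edge_perfect : Prop :=
  bijective (fun p : F * bool => if p.2 then e1 p.1 else e2 p.1).

(* half-integer Boyd-Carr point (the support is cubic, each vertex has exactly
   one 1-edge and the half-edges form vertex-disjoint 4-cycles by construction) *)
Definition boyd_carr_point (R : realType) : Prop :=
  [/\ one_edge_perfect, edge_connected bc_ends 3 & inLP bc_ends (@bc_x R)].

Definition sq_vert := ((Q * 'I_4) + {f : F & 'I_(lenm1 f)})%type.
Definition sq_edge := ((Q * 'I_4) + {f : F & 'I_(lenm1 f).+1})%type.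

(* k-th vertex (0 <= k <= lenm1 f + 1) of the path replacing f *)
Definition pathv (f : F) (k : nat) : sq_vert :=
  if k == 0%N then inl (e1 f) else
  match (insub k.-1 : option 'I_(lenm1 f)) with
  | Some j => inr (Tagged (fun g => 'I_(lenm1 g)) j)
  | None => inl (e2 f)
  end.

Definition sq_ends (e : sq_edge) : sq_vert * sq_vert :=
  match e with
  | inl (q, i) => (inl (q, i), inl (q, ordS i))
  | inr p => (pathv (tag p) (tagged p), pathv (tag p) (tagged p).+1)
  end.

Definition one_edge (e : sq_edge) : bool := if e is inr _ then true else false.

Definition sq_x {R : realType} (e : sq_edge) : R :=
  match e with inl _ => 1 / 2 | inr _ => 1 end.

Definition good_ham (H : {set sq_edge}) : Prop :=
  [/\ hamiltonian_cycle sq_ends H,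
      (forall e, one_edge e -> e \in H) &
      (forall q : Q, exists i : 'I_4, forall j : 'I_4,
          (inl (q, j) \in H) = (j == i) || (j == ordS (ordS i)))].

Definition r_vec {R : realType} (alpha : R) (H : {set sq_edge}) (e : sq_edge) : R :=
  if one_edge e then 1 + alpha
  else if e \in H then 1 / 2 else 1 - alpha.

Definition G_ends (f : F) : Q * Q := ((e1 f).1, (e2 f).1).

End SquarePoint.

(* Main.v *)
Require Import Defs.
From HB Require Import structures.
From mathcomp Require Import all_boot all_order all_algebra.
From mathcomp Require Import reals zify ring lra.

Ltac ord4 t := let H := fresh in case: t => [[|[|[|[|?]]]] H] //.

Lemma nat_form (f : 'I_4 -> bool) : exists g : nat -> bool, forall j : 'I_4, f j = g j.
Proof. by exists (fun n => f (inord n)) => j; rewrite inord_val. Qed.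
Lemma o0 : (0 < 4)%N. Proof. by []. Qed.
Lemma o1 : (1 < 4)%N. Proof. by []. Qed.
Lemma o2 : (2 < 4)%N. Proof. by []. Qed.
Lemma o3 : (3 < 4)%N. Proof. by []. Qed.

Lemma sq1 (f : 'I_4 -> bool) (r : 'I_4) :
  (forall j, j != r -> f j = f (ordS j)) -> forall a b, f a = f b.
Proof.
have [g Eg] := nat_form f; move=> Hf a b; rewrite !Eg.
have H0 := Hf (Ordinal o0); have H1 := Hf (Ordinal o1); have H2 := Hf (Ordinal o2); have H3 := Hf (Ordinal o3).
rewrite !Eg /= in H0 H1 H2 H3.
clear Hf Eg. move: H0 H1 H2 H3. ord4 r; ord4 a; ord4 b => /=; move: (g 0) (g 1) (g 2) (g 3); do 4! case; move=> /=; intuition.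
Qed.

Lemma sq2 (f : 'I_4 -> bool) (t : 'I_4) :
  (forall j, j != t -> ordS j != t -> f j = f (ordS j)) -> forall a b, a != t -> b != t -> f a = f b.
Proof.
have [g Eg] := nat_form f; move=> Hf a b; rewrite !Eg.
have H0 := Hf (Ordinal o0); have H1 := Hf (Ordinal o1); have H2 := Hf (Ordinal o2); have H3 := Hf (Ordinal o3).
rewrite !Eg /= in H0 H1 H2 H3.
clear Hf Eg. move: H0 H1 H2 H3. ord4 t; ord4 a; ord4 b => /=; move: (g 0) (g 1) (g 2) (g 3); do 4! case; move=> /=; intuition.
Qed.

Definition hrem (b t : 'I_4) : 'I_4 := if (t == b) || (t == ordS b) then ordS (ordS b) else b.
Definition ordP (t : 'I_4) : 'I_4 := ordS (ordS (ordS t)).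

Lemma ordS_neq (t : 'I_4) : ordS t != t. Proof. by ord4 t. Qed.
Lemma ordP_neq (t : 'I_4) : ordP t != t. Proof. by ord4 t. Qed.
Lemma ordSP (t : 'I_4) : ordS (ordP t) = t. Proof. by apply/eqP; ord4 t. Qed.
Lemma hrem_neq b t : hrem b t != t. Proof. by ord4 b; ord4 t. Qed.
Lemma hremS_neq b t : ordS (hrem b t) != t. Proof. by ord4 b; ord4 t. Qed.

Definition Zf (b : 'I_4) (x : option 'I_4) (j : 'I_4) : nat :=
  match x with None => ((j != b) : nat) + ((j != ordS (ordS b)) : nat)
  | Some t => ((j != hrem b t) : nat) + (~~((j == t) || (ordS j == t)) : nat) end.
Lemma CZ0 b j : (Zf b None j = if (j == b) || (j == ordS (ordS b)) then 1 else 2)%N.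
Proof. rewrite /=. by ord4 b; ord4 j. Qed.
Lemma CZ1 b j : (\sum_(t < 4) Zf b (Some t) j = if (j == b) || (j == ordS (ordS b)) then 4 else 6)%N.
Proof. rewrite !big_ord_recr big_ord0 /=. by ord4 b; ord4 j. Qed.

Definition phi_ {Q F : finType} (e1 e2 : F -> Q * 'I_4) (p : F * bool) := if p.2 then e1 p.1 else e2 p.1.

Section Outer.
Variables (Q F : finType) (e1 e2 : F -> Q * 'I_4) (lenm1 : F -> nat).
Variable psi : Q * 'I_4 -> F * bool.
Local Notation phi := (phi_ e1 e2).
Variables (phiK : cancel phi psi) (psiK : cancel psi phi).
Variable (noloop : forall f, (e1 f).1 != (e2 f).1).
Local Notation pv := (pathv e1 e2 lenm1).
Local Notation ends := (@sq_ends Q F e1 e2 lenm1).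
Local Notation Ge := (G_ends e1 e2).

Definition touched (M : {set F}) v := (psi v).1 \in M.
Definition tch M q := [pick t | touched M (q,t)].
Definition hvy (o : bool) q t := o == (psi (q,t)).2.
Definition removed M o (bq : Q -> 'I_4) q j :=
  match tch M q with
  | None => j == (if o then bq q else ordS (ordS (bq q)))
  | Some t => if hvy o q t then j == hrem (bq q) t else (j == t) || (ordS j == t)
  end.
Definition yv M o bq (e : sq_edge Q lenm1) : nat :=
  match e with
  | inl (q, j) => ~~ removed M o bq q j
  | inr p => if tag p \in M then 2 else 1
  end.

Lemma pv0 f : pv f 0 = inl (e1 f). Proof. by []. Qed.
Lemma pvend f : pv f (lenm1 f).+1 = inl (e2 f).
Proof. by rewrite /pathv /= insubF // ltnn. Qed.
Lemma pvin f (j : 'I_(lenm1 f)) : pv f j.+1 = inr (Tagged (fun g => 'I_(lenm1 g)) j).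
Proof. by rewrite /pathv /= valK. Qed.

Lemma psi1 f : psi (e1 f) = (f, true). Proof. exact: (phiK (f, true)). Qed.
Lemma psi2 f : psi (e2 f) = (f, false). Proof. exact: (phiK (f, false)). Qed.

Lemma inc_psi v : incident Ge (psi v).1 v.1.
Proof.
rewrite -{2}(psiK v); case: (psi v) => f b; rewrite /phi_ /incident /G_ends /=.
by case: b; rewrite eqxx ?orbT.
Qed.

Lemma inr_neq f g (k : 'I_(lenm1 f).+1) (k' : 'I_(lenm1 g).+1) :
  (f != g) || (k != k' :> nat) ->
  inr (Tagged (fun h => 'I_(lenm1 h).+1) k) != inr (Tagged (fun h => 'I_(lenm1 h).+1) k') :> sq_edge Q lenm1.
Proof.
move=> H; apply/negP => /eqP E.
have E1 := f_equal (fun e : sq_edge Q lenm1 => if e is inr p then tag p else f) E.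
have E2 := f_equal (fun e : sq_edge Q lenm1 => if e is inr p then val (tagged p) else 0%N) E.
by move: H; rewrite /= in E1 E2; rewrite E2 eqxx orbF E1 eqxx.
Qed.

Section Conn.
Variables (M : {set F}) (o : bool) (bq : Q -> 'I_4).
Variables (HM : matching Ge M) (HV : two_vertex_connected Ge (~: M)).

Lemma T1 q t t' : touched M (q,t) -> touched M (q,t') -> t = t'.
Proof.
rewrite /touched => Ht Ht'.
have I1 := inc_psi (q,t); have I2 := inc_psi (q,t').
case E: ((psi (q,t)).1 == (psi (q,t')).1); last first.
  by have := HM.2 _ _ q Ht Ht' (negbT E) I1; rewrite I2.
have := psiK (q,t); have := psiK (q,t'); move/eqP: E.
case: (psi (q,t)) => f b; case: (psi (q,t')) => f' b' /= <-.
rewrite /phi_ /=; case: b; case: b' => /= E1 E2;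
  first [by move: E2; rewrite E1 => -[->] | by have := noloop f; rewrite E1 E2 eqxx].
Qed.

Lemma tchP q t : (tch M q == Some t) = touched M (q,t).
Proof.
rewrite /tch; case: pickP => [t' Ht'|H0] /=.
  apply/eqP/idP => [[<-] //|Ht]; by rewrite (T1 _ _ _ Ht' Ht).
by rewrite H0.
Qed.

Definition light q t := touched M (q,t) && ~~ hvy o q t.
Definition cq q := if tch M q is Some t then ordS t else ord0.
Lemma cq_nt q : ~~ touched M (q, cq q).
Proof.
rewrite /cq; case E: (tch M q) => [t|].
  apply/negP => Ht; have Ht0 : touched M (q,t) by rewrite -tchP E.
  by have := T1 _ _ _ Ht Ht0; apply/eqP; exact: ordS_neq.
by apply/negP => Ht; move: E; rewrite /tch; case: pickP => [x _ //|H0 _]; have := H0 ord0; rewrite /= Ht.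
Qed.

Section Cut.
Variable S : {set sq_vert Q lenm1}.
Definition uncut e := (0 < yv M o bq e)%N -> ((ends e).1 \in S) = ((ends e).2 \in S).
Definition sd q := inl (q, cq q) \in S.

Lemma core q : (forall j, uncut (inl (q,j))) -> forall a, ~~ light q a -> (inl (q,a) \in S) = sd q.
Proof.
move=> Hq a Ha.
have Hj : forall j, ~~ removed M o bq q j -> (inl (q,j) \in S) = (inl (q, ordS j) \in S).
  by move=> j Hj; apply: (Hq j); rewrite /= lt0b.
have Hc := cq_nt q.
move: Hj Ha Hc; rewrite /sd /light /cq /removed; case E: (tch M q) => [t|].
  case Hh: (hvy o q t) => Hj Ha Hc.
    by apply: (@sq1 (fun j => inl (q,j) \in S) (hrem (bq q) t)) => j Hjr; apply: Hj.
  have Ht : touched M (q,t) by rewrite -tchP E.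
  apply: (@sq2 (fun j => inl (q,j) \in S) t).
  - by move=> j H1 H2; apply: Hj; rewrite negb_or H1 H2.
  - by apply/eqP => Eat; move: Ha; rewrite Eat Ht Hh.
  - exact: ordS_neq.
move=> Hj Ha Hc.
by apply: (@sq1 (fun j => inl (q,j) \in S) (if o then bq q else ordS (ordS (bq q)))) => j Hjr; apply: Hj.
Qed.

Lemma core' v : (forall j, uncut (inl (v.1,j))) -> ~~ light v.1 v.2 -> (inl v \in S) = sd v.1.
Proof. by case: v => q t /= H; apply: core H t. Qed.

Lemma uncut_path p : uncut (inr p) -> (pv (tag p) (tagged p) \in S) = (pv (tag p) (tagged p).+1 \in S).
Proof. by move=> U; apply: U => /=; case: ifP. Qed.

Lemma walk f (a b : nat) : (a <= b <= (lenm1 f).+1)%N ->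
  (forall k : 'I_(lenm1 f).+1, (a <= k < b)%N -> uncut (inr (Tagged (fun h => 'I_(lenm1 h).+1) k))) ->
  (pv f a \in S) = (pv f b \in S).
Proof.
elim: b => [|b IH] /andP [Hab Hb] Hk.
  by move: Hab; rewrite leqn0 => /eqP ->.
move: Hab; rewrite leq_eqVlt => /orP [/eqP -> //|]; rewrite ltnS => Hab.
rewrite (IH _); last first.
- by move=> k /andP [H1 H2]; apply: Hk; rewrite H1 ltnS ltnW.
- by rewrite Hab ltnW.
have Hab' : (a <= Ordinal Hb < b.+1)%N by rewrite /= Hab ltnSn.
exact: (uncut_path _ (Hk _ Hab')).
Qed.

Lemma untouched_end1 f : f \notin M -> ~~ light (e1 f).1 (e1 f).2.
Proof. by move=> Hf; rewrite /light /touched -surjective_pairing psi1 /= (negbTE Hf). Qed.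
Lemma untouched_end2 f : f \notin M -> ~~ light (e2 f).1 (e2 f).2.
Proof. by move=> Hf; rewrite /light /touched -surjective_pairing psi2 /= (negbTE Hf). Qed.

Lemma path_full f : (forall k : 'I_(lenm1 f).+1, uncut (inr (Tagged (fun h => 'I_(lenm1 h).+1) k))) ->
  (inl (e1 f) \in S) = (inl (e2 f) \in S).
Proof.
move=> Hp; rewrite -(pv0 f) -(pvend f); apply: walk; first by rewrite leqnn.
by move=> k _; apply: Hp.
Qed.

Lemma edge_eq g : g \notin M ->
  (forall k : 'I_(lenm1 g).+1, uncut (inr (Tagged (fun h => 'I_(lenm1 h).+1) k))) ->
  (forall j, uncut (inl ((e1 g).1, j))) -> (forall j, uncut (inl ((e2 g).1, j))) ->
  sd (e1 g).1 = sd (e2 g).1.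
Proof.
move=> Hg Hp H1 H2.
rewrite -(core' (e1 g) H1 (untouched_end1 _ Hg)) -(core' (e2 g) H2 (untouched_end2 _ Hg)).
exact: path_full.
Qed.

Lemma L1 qa : (forall g, g \notin M -> ~~ incident Ge g qa -> sd (e1 g).1 = sd (e2 g).1) ->
  forall u v, u != qa -> v != qa -> sd u = sd v.
Proof.
move=> Hg u v Hu Hv.
have := HV.2.2 qa u v; rewrite !in_setD1 Hu Hv !in_setT => /(_ isT isT) /connectP [p Hp ->] {v Hv}.
elim: p u Hu Hp => [|w p IH] u Hu //=.
case/andP => /and3P [_ Hw /existsP [g /andP [HgM Hends]]] Hp.
have Hw' : w != qa by move: Hw; rewrite in_setD1 => /andP [].
rewrite in_setC in HgM.
rewrite -(IH w Hw' Hp).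
move: Hends; rewrite /G_ends /=.
case/orP => /andP [/eqP E1 /eqP E2]; rewrite -E1 -E2.
  by apply: Hg => //; rewrite /incident /G_ends /= E1 E2 negb_or Hu Hw'.
by symmetry; apply: Hg => //; rewrite /incident /G_ends /= E1 E2 negb_or Hu Hw'.
Qed.

Lemma L2 qa qb : qa != qb ->
  (forall g, g \notin M -> ~~ incident Ge g qa -> sd (e1 g).1 = sd (e2 g).1) ->
  (forall g, g \notin M -> ~~ incident Ge g qb -> sd (e1 g).1 = sd (e2 g).1) ->
  forall u v, sd u = sd v.
Proof.
move=> Hab Ha Hb.
have [w Hw] : exists w, (w != qa) && (w != qb).
  case: (boolP [exists w, (w != qa) && (w != qb)]) => [/existsP // | /existsPn Hn].
  have H : (#|[set: Q]| <= #|[set qa; qb]|)%N.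
    apply: subset_leq_card; apply/subsetP => x _; rewrite !inE.
    by move: (Hn x); rewrite negb_and !negbK.
  have H2 : (#|Q| <= 2)%N by rewrite -cardsT (leq_trans H) // cards2; case: (qa != qb).
  by have := HV.1; rewrite ltnNge H2.
case/andP: Hw => Hwa Hwb.
have key : forall x, sd x = sd w.
  move=> x; case Ex: (x == qa).
    by move/eqP: Ex => ->; apply: (L1 _ Hb) => //.
  by apply: (L1 _ Ha) => //; rewrite Ex.
by move=> u v; rewrite !key.
Qed.

Lemma side_inl (Hall : forall e, uncut e) x : exists q, (inl x \in S) = sd q.
Proof.
case Hl: (light x.1 x.2).
  move: Hl; rewrite /light /hvy /touched -surjective_pairing.
  have Ex := psiK x; case E: (psi x) Ex => [f b] Ex /= /andP [Hf Hb].
  have Hx' : psi (phi (f, ~~b)) = (f, ~~b) := phiK _.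
  exists (phi (f, ~~b)).1.
  rewrite -(core' (phi (f, ~~b))); last first.
  - rewrite /light /hvy /touched -surjective_pairing Hx' /= Hf /=.
    by case: (o) Hb; case: (b).
  - by move=> j; apply: Hall.
  have Hpf := path_full f (fun k => Hall _).
  rewrite -Ex /phi_ /=; case: (b); by rewrite /= Hpf.
exists x.1; apply: core'; first by move=> j; apply: Hall.
by rewrite Hl.
Qed.

Lemma caseNone : S != set0 -> S != setT -> (forall e, uncut e) -> False.
Proof.
move=> S0 ST Hall.
have [qa [qb [_ _ Hab]]] : exists qa qb : Q, [/\ qa \in Q, qb \in Q & qa != qb].
  apply/card_gt1P; by have := HV.1 => /ltnW.
have Hsd : forall u v, sd u = sd v.
  by apply: (L2 _ _ Hab) => g Hg _; apply: edge_eq => // *; apply: Hall.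
have Hinl : forall x, (inl x \in S) = sd qa.
  by move=> x; have [q ->] := side_inl Hall x; apply: Hsd.
have Hv : forall v, (v \in S) = sd qa.
  case=> [x|[f j]]; first exact: Hinl.
  rewrite -pvin -(Hinl (e1 f)) -pv0; symmetry; apply: walk.
    by rewrite leq0n /= ltnS ltnW.
  by move=> k _; apply: Hall.
case/set0Pn: S0 => v0 Hv0.
move/negP: ST; apply; apply/eqP/setP => v.
by rewrite inE Hv -(Hv v0) Hv0.
Qed.

Lemma casePath f0 (k0 : 'I_(lenm1 f0).+1) :
  (forall e, e != inr (Tagged (fun h => 'I_(lenm1 h).+1) k0) -> uncut e) -> f0 \notin M ->
  ((ends (inr (Tagged (fun h => 'I_(lenm1 h).+1) k0))).1 \in S) !=
  ((ends (inr (Tagged (fun h => 'I_(lenm1 h).+1) k0))).2 \in S) -> False.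
Proof.
move=> Hun Hf0 Hcr.
have Hsq : forall q j, uncut (inl (q,j)) by move=> q j; apply: Hun.
have Hoth : forall g (k : 'I_(lenm1 g).+1), g != f0 -> uncut (inr (Tagged (fun h => 'I_(lenm1 h).+1) k)).
  by move=> g k Hg; apply: Hun; apply: inr_neq; rewrite Hg.
have Hsd : forall u v, sd u = sd v.
  apply: (L2 _ _ (noloop f0)) => g Hg Hni; apply: edge_eq => //; try (by move=> j; apply: Hsq).
  - move=> k; apply: Hoth; apply/eqP => Eg; move: Hni; rewrite Eg /incident /G_ends /= eqxx //.
  - move=> k; apply: Hoth; apply/eqP => Eg; move: Hni; rewrite Eg /incident /G_ends /= eqxx orbT //.
have E1 : (inl (e1 f0) \in S) = sd (e1 f0).1.
  by apply: core'; [move=> j; apply: Hsq | apply: untouched_end1].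
have E2 : (inl (e2 f0) \in S) = sd (e2 f0).1.
  by apply: core'; [move=> j; apply: Hsq | apply: untouched_end2].
have W1 : (pv f0 0 \in S) = (pv f0 k0 \in S).
  apply: walk; first by rewrite leq0n /= ltnW // ltn_ord.
  move=> k /andP [_ Hk]; apply: Hun; apply: inr_neq; by rewrite eqxx /= (ltn_eqF Hk).
have W2 : (pv f0 k0.+1 \in S) = (pv f0 (lenm1 f0).+1 \in S).
  apply: walk; first by rewrite ltn_ord leqnn.
  move=> k /andP [Hk _]; apply: Hun; apply: inr_neq; by rewrite eqxx /= (gtn_eqF Hk).
by move: Hcr; rewrite /= -W1 W2 pv0 pvend E1 E2 (Hsd (e1 f0).1 (e2 f0).1) eqxx.
Qed.

Lemma via_edge q0 v : v.1 = q0 -> ~~ touched M v ->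
  (forall p, uncut (inr p)) -> (forall q j, q != q0 -> uncut (inl (q,j))) ->
  exists q', q' != q0 /\ (inl v \in S) = sd q'.
Proof.
move=> Hv0 Hv Hp Hq.
have Ex := psiK v; case E: (psi v) Ex => [g b] Ex.
have Hg : g \notin M by move: Hv; rewrite /touched E.
have Hx' : psi (phi (g, ~~b)) = (g, ~~b) := phiK _.
have Hne : (phi (g, ~~b)).1 != q0.
  rewrite -Hv0 -Ex /phi_ /=; case: (b) => /=; last exact: noloop.
  by rewrite eq_sym; exact: noloop.
exists (phi (g, ~~b)).1; split => //.
rewrite -(core' (phi (g, ~~b))); last first.
- by rewrite /light /touched -surjective_pairing Hx' /= (negbTE Hg).
- by move=> j; apply: Hq.
have Hpf := path_full g (fun k => Hp _).
rewrite -Ex /phi_ /=; case: (b); by rewrite /= Hpf.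
Qed.

Lemma find_u q0 j0 : ~~ removed M o bq q0 j0 -> (forall j, j != j0 -> uncut (inl (q0,j))) ->
  forall w, (w == j0) || (w == ordS j0) ->
  exists u, ~~ touched M (q0,u) /\ (inl (q0,u) \in S) = (inl (q0,w) \in S).
Proof.
move=> Hused Hunc w Hw.
case Ht: (touched M (q0,w)); last by exists w; rewrite Ht.
have Et : tch M q0 = Some w by apply/eqP; rewrite tchP.
have Hj : forall j, j != j0 -> ~~ removed M o bq q0 j -> (inl (q0,j) \in S) = (inl (q0, ordS j) \in S).
  by move=> j Hj Hr; apply: (Hunc j Hj); rewrite /= lt0b.
move: Hused Hj; rewrite /removed Et; case Hh: (hvy o q0 w); last first.
  by case/orP: Hw => /eqP ->; rewrite eqxx ?orbT.
move=> Hr Hj.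
case/orP: Hw => /eqP Ew.
- subst j0; exists (ordP w); split.
    apply/negP => Ht'; have E' := T1 _ _ _ Ht' Ht.
    by have := ordSP w; rewrite E' => /eqP; rewrite (negbTE (ordS_neq w)).
  rewrite (Hj (ordP w)) ?ordSP //; first exact: ordP_neq.
  by apply/negP => /eqP E'; have := hremS_neq (bq q0) w; rewrite -E' ordSP eqxx.
- exists (ordS w); split.
    apply/negP => Ht'; have E' := T1 _ _ _ Ht' Ht.
    by have := ordS_neq w; rewrite E' eqxx.
  symmetry; apply: Hj.
    by rewrite Ew; exact: ordS_neq.
  by rewrite eq_sym hrem_neq.
Qed.

Lemma caseSq q0 j0 : (forall e, e != inl (q0,j0) -> uncut e) -> ~~ removed M o bq q0 j0 ->
  (inl (q0,j0) \in S) != (inl (q0, ordS j0) \in S) -> False.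
Proof.
move=> Hun Hused Hcr.
have Hp : forall p, uncut (inr p) by move=> p; apply: Hun.
have Hq : forall q j, q != q0 -> uncut (inl (q,j)).
  by move=> q j Hq; apply: Hun; apply/negP => /eqP [Eq _]; rewrite Eq eqxx in Hq.
have Hsd : forall u v, u != q0 -> v != q0 -> sd u = sd v.
  apply: L1 => g Hg Hni.
  move: Hni; rewrite /incident /G_ends /= negb_or => /andP [N1 N2].
  by apply: edge_eq => // j; apply: Hq.
have Hj0 : forall j, j != j0 -> uncut (inl (q0,j)).
  by move=> j Hj; apply: Hun; apply/negP => /eqP [Ej]; rewrite Ej eqxx in Hj.
have G : forall w, (w == j0) || (w == ordS j0) -> exists q', q' != q0 /\ (inl (q0,w) \in S) = sd q'.
  move=> w Hw; have [u [Hu Eu]] := @find_u q0 j0 Hused Hj0 w Hw.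
  have [q' [Hq' Eq']] := @via_edge q0 (q0,u) erefl Hu Hp Hq.
  by exists q'; rewrite -Eu.
have Hw1 : (j0 == j0) || (j0 == ordS j0) by rewrite eqxx.
have Hw2 : (ordS j0 == j0) || (ordS j0 == ordS j0) by rewrite eqxx orbT.
have [q1 [H1 E1]] := G j0 Hw1.
have [q2 [H2 E2]] := G (ordS j0) Hw2.
by move: Hcr; rewrite E1 E2 (Hsd _ _ H1 H2) eqxx.
Qed.

End Cut.

Lemma ecm : two_ecm ends (yv M o bq).
Proof.
move=> S S0 ST; rewrite leqNgt; apply/negP => Hlt.
have Hle : forall e, e \in delta ends S -> (yv M o bq e <= \sum_(e in delta ends S) yv M o bq e)%N.
  by move=> e He; rewrite (bigD1 e) //= leq_addr.
have Huniq : forall e e', e \in delta ends S -> e' \in delta ends S ->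
    (0 < yv M o bq e)%N -> (0 < yv M o bq e')%N -> e = e'.
  move=> e e' He He' Hy Hy'; case: (eqVneq e e') => // Hne; exfalso.
  have : (yv M o bq e + yv M o bq e' <= \sum_(e in delta ends S) yv M o bq e)%N.
    rewrite (bigD1 e) //= leq_add2l (bigD1 e') /= ?leq_addr //.
    by rewrite He' eq_sym Hne.
  move: Hlt; lia.
case: (pickP [pred e | (e \in delta ends S) && (0 < yv M o bq e)%N]) => [e0 /andP [He0 Hy0] | Hnone].
  have Hun : forall e, e != e0 -> uncut S e.
    move=> e Hne Hy.
    case Hd: (((ends e).1 \in S) != ((ends e).2 \in S)); last by apply/eqP; move/negbFE: Hd.
    have He : e \in delta ends S by rewrite inE Hd.
    by rewrite (Huniq _ _ He He0 Hy Hy0) eqxx in Hne.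
  have Hy1 : yv M o bq e0 = 1%N by have := Hle _ He0; move: Hlt Hy0; lia.
  move: He0 Hy0 Hun Hy1; case: e0 => [[q0 j0]|[f0 k0]] He0 Hy0 Hun Hy1.
    apply: (caseSq S q0 j0 Hun); first by move: Hy0; rewrite /= lt0b.
    by move: He0; rewrite inE.
  apply: (casePath S f0 k0 Hun); first by move: Hy1; rewrite /=; case: ifP.
  by move: He0; rewrite inE.
apply: (caseNone S S0 ST) => e Hy.
case Hd: (((ends e).1 \in S) != ((ends e).2 \in S)); last by apply/eqP; move/negbFE: Hd.
by have := Hnone e; rewrite /= inE Hd Hy.
Qed.

End Conn.
End Outer.

Import Order.TTheory GRing.Theory Num.Theory.
Local Open Scope ring_scope.

Lemma ysum (Q F : finType) lenm1 psi M (bq : Q -> 'I_4) q j :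
  (yv Q F lenm1 psi M true bq (inl (q,j)) + yv Q F lenm1 psi M false bq (inl (q,j))
   = Zf (bq q) (tch Q F psi M q) j)%N.
Proof.
rewrite /yv /removed /Zf /hvy; case: (tch Q F psi M q) => [t|] //=.
by case: ((psi (q,t)).2) => //=; rewrite addnC.
Qed.

Lemma Zdecomp (R : realType) b x j :
  ((Zf b x j)%:R : R) = (Zf b None j)%:R * (1 - \sum_(t < 4) ((x == Some t) : nat)%:R)
    + \sum_(t < 4) (Zf b (Some t) j)%:R * ((x == Some t) : nat)%:R.
Proof.
have Eopt : forall a c : 'I_4, (Some a == Some c) = (a == c) by move=> a c; apply/eqP/eqP => [[]|->].
have En : forall a : 'I_4, (None == Some a) = false by [].
case: x => [t0|].
  have S1 : \sum_(t < 4) ((Some t0 == Some t) : nat)%:R = 1 :> R.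
    rewrite (bigD1 t0) //= Eopt eqxx big1 ?addr0 // => t Ht.
    by rewrite Eopt; case: (t0 =P t) Ht => // ->; rewrite eqxx.
  have S2 : \sum_(t < 4) (Zf b (Some t) j)%:R * ((Some t0 == Some t) : nat)%:R = (Zf b (Some t0) j)%:R :> R.
    rewrite (bigD1 t0) //= Eopt eqxx mulr1 big1 ?addr0 // => t Ht.
    by rewrite Eopt; case: (t0 =P t) Ht => [->|_ _]; rewrite ?eqxx ?mulr0.
  by rewrite S1 S2 subrr mulr0 add0r.
rewrite !big1 ?subr0 ?mulr1 ?addr0 // => t _; by rewrite En ?mulr0.
Qed.

Lemma alg (R : realType) (k : nat) (lam : 'I_k -> R) (c : 'I_k -> 'I_4 -> R) (Z0 : R) (Z : 'I_4 -> R) (a : R) :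
  \sum_i lam i = 1 -> (forall t, \sum_i lam i * c i t = a) ->
  \sum_i lam i / 2 * (Z0 * (1 - \sum_t c i t) + \sum_t Z t * c i t)
  = (Z0 * (1 - 4 * a) + a * \sum_t Z t) / 2.
Proof.
move=> H1 Ha.
have E : forall i, lam i / 2 * (Z0 * (1 - \sum_t c i t) + \sum_t Z t * c i t)
  = Z0 / 2 * lam i - Z0 / 2 * (\sum_t lam i * c i t) + 2^-1 * \sum_t Z t * (lam i * c i t).
  move=> i; rewrite -!mulr_sumr.
  have -> : \sum_t Z t * (lam i * c i t) = lam i * \sum_t Z t * c i t.
    by rewrite mulr_sumr; apply: eq_bigr => t _; ring.
  ring.
rewrite (eq_bigr _ (fun i _ => E i)) big_split sumrB /= -!mulr_sumr H1.
rewrite exchange_big /= (eq_bigr (fun _ => a)); last by move=> t _; rewrite Ha.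
rewrite exchange_big /=.
have E2 : \sum_(j < 4) \sum_(i < k) Z j * (lam i * c i j) = \sum_(j < 4) Z j * a.
  by apply: eq_bigr => t _; rewrite -mulr_sumr Ha.
rewrite E2 sumr_const card_ord -mulr_suml -[a *+ 4]mulr_natl.
by field.
Qed.

Lemma cc_fin (R : realType) (V E : finType) (ends : E -> V * V) (T : finType) (w : T -> R)
  (y : T -> E -> nat) (r : E -> R) :
  (forall t, 0 <= w t) -> \sum_t w t = 1 -> (forall t, two_ecm ends (y t)) ->
  (forall e, r e = \sum_t w t * (y t e)%:R) -> convex_comb_2ecm ends r.
Proof.
move=> H0 H1 H2 H3.
have Hs : forall G : T -> R, \sum_t G t = \sum_(j < #|T|) G (enum_val j).
  by move=> G; rewrite (reindex (fun j : 'I_#|T| => enum_val j)) //; apply: onW_bij; exact: enum_val_bij.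
exists #|T|, (fun j => w (enum_val j)), (fun j => y (enum_val j)).
split; first by move=> j.
split; first by rewrite -Hs.
split; first by move=> j.
by move=> e; rewrite H3 Hs.
Qed.

Theorem lemma12 (R : realType) (Q F : finType) (e1 e2 : F -> Q * 'I_4)
    (lenm1 : F -> nat)
    (Hx : boyd_carr_point e1 e2 R)
    (H : {set sq_edge Q lenm1}) (HH : good_ham e1 e2 H)
    (alpha : R) (Halpha : 0 < alpha)
    (HP : P_prop (G_ends e1 e2) alpha) :
  convex_comb_2ecm (@sq_ends Q F e1 e2 lenm1) (r_vec alpha H).
Proof.
case: Hx => Hperf _ _; case: Hperf => psi phiK psiK.
case: HP => k [lam [Ms [Hlam0 [Hlam1 [HMs Hal]]]]].
case: HH => _ _ Hsq.
have noloop : forall f, (e1 f).1 != (e2 f).1.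
  move=> f; case: (pickP [pred i | f \in Ms i]) => [i Hi | H0].
    by have := (HMs i).1.1 f Hi.
  have E : alpha = 0 by rewrite (Hal f) big1 // => i _; have := H0 i; rewrite /= => ->; rewrite mulr0.
  by rewrite E ltxx in Halpha.
pose bq q := odflt ord0 [pick i | [forall j : 'I_4, (inl (q,j) \in H) == ((j == i) || (j == ordS (ordS i)))]].
have Hbq : forall q j, (inl (q,j) \in H) = (j == bq q) || (j == ordS (ordS (bq q))).
  move=> q j; rewrite /bq; case: pickP => [i /forallP Hi | H0] /=; first exact/eqP/Hi.
  have [i Hi] := Hsq q; move: (H0 i) => /negbT/forallPn [j' /negP []]; by rewrite Hi.
apply: (@cc_fin R _ _ _ ('I_k * bool)%type (fun p => lam p.1 / 2)
   (fun p => yv Q F lenm1 psi (Ms p.1) p.2 bq)).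
- by move=> p; rewrite divr_ge0 // ler0n.
- rewrite -(pair_bigA _ (fun i (o : bool) => lam i / 2)) /= -[RHS]Hlam1; apply: eq_bigr => i _.
  by rewrite big_bool /=; field.
- move=> p; exact: (@ecm Q F e1 e2 lenm1 psi phiK psiK noloop (Ms p.1) p.2 bq (HMs p.1).1 (HMs p.1).2).
move=> e; rewrite -(pair_bigA _ (fun i o => lam i / 2 * (yv Q F lenm1 psi (Ms i) o bq e)%:R)) /=.
under eq_bigr do rewrite big_bool /= -mulrDr -natrD.
case: e => [[q j]|p].
  under eq_bigr do rewrite ysum Zdecomp.
  have Hc : forall t, \sum_i lam i * ((tch Q F psi (Ms i) q == Some t) : nat)%:R = alpha.
    move=> t; rewrite (Hal (psi (q,t)).1); apply: eq_bigr => i _.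
    by rewrite (@tchP Q F e1 e2 psi psiK noloop (Ms i) (HMs i).1 q t).
  rewrite (@alg _ _ _ _ _ _ _ Hlam1 Hc) -natr_sum CZ1 CZ0 /r_vec /= Hbq.
  by case: ifP => _; field.
rewrite /r_vec /= (Hal (tag p)).
transitivity (\sum_i (lam i + lam i * (tag p \in Ms i)%:R)); first by rewrite big_split /= Hlam1.
by apply: eq_bigr => i _; case: (tag p \in Ms i) => /=; field.
Qed.
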